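(* Let $C=L_1;\ldots;L_d$ be a sorting network on $n$ channels of depth $d\ge2$ whose last layer is in last layer normal form. Suppose that $(i,i+1)\in L_d$, that channel $i+2$ is used in layer $L_{d-1}$ but not in layer $L_d$, and that channels $i$ and $i+1$ are both unused in layer $L_{d-1}$. Then there is a sorting network $C'=L'_1;\ldots;L'_d$ on $n$ channels of depth $d$ whose last layer is in last layer normal form and such that channels $i+1$ and $i+2$ are both used in layers $L'_{d-1}$ and $L'_d$.
   Context: Channels are numbered $1,\ldots,n$. A comparator network of depth $d$ is a sequence $C=L_1;\ldots;L_d$ of layers; each layer is a set of comparators $(i,j)$ with $1\le i<j\le n$, each channel occurring in at most one comparator of a layer. An input $\bar x\in\{0,1\}^n$ propagates: $\bar x_0=\bar x$, and $\bar x_k$ is obtained from $\bar x_{k-1}$ by, for each $(i,j)\in L_k$, putting the minimum of the values at positions $i,j$ at position $i$ and the maximum at position $j$. The output is $C(\bar x)=\bar x_d$; $C$ is a sorting network if $C(\bar x)$ is sorted non-decreasingly for all $\bar x\in\{0,1\}^n$. A channel is used in a layer if it occurs in some comparator of that layer. The last layer $L_d$ is in last layer normal form if every comparator of $L_d$ is of the form $(i,i+1)$ and there is no $i<n$ with both $i$ and $i+1$ unused in $L_d$. *)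

(* Defs.v *)
From mathcomp Require Import all_boot.
Set Implicit Arguments. Unset Strict Implicit. Unset Printing Implicit Defensive.

(* A comparator (i,j) with i < j; a layer is a finite list of comparators;
   a network is the list of its layers L_1; ...; L_d (depth = size). *)
Definition comparator := (nat * nat)%type.
Definition layer := seq comparator.
Definition network := seq layer.

Definition channels (L : layer) : seq nat := flatten [seq [:: c.1; c.2] | c <- L].

Definition used (L : layer) (k : nat) : bool := k \in channels L.

Definition layer_on (n : nat) (L : layer) : bool :=
  all (fun c => (1 <= c.1) && (c.1 < c.2) && (c.2 <= n)) L && uniq (channels L).

Definition network_on (n : nat) (C : network) : bool := all (layer_on n) C.

(* Binary inputs: values at channels 1..n (values elsewhere are irrelevant). *)
Definition input := nat -> bool.

Definition apply_comp (c : comparator) (x : input) : input :=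
  fun k => if k == c.1 then x c.1 && x c.2
           else if k == c.2 then x c.1 || x c.2 else x k.

(* comparators of a layer act on disjoint channels, so the order is irrelevant *)
Definition apply_layer (L : layer) (x : input) : input :=
  foldl (fun y c => apply_comp c y) x L.

Definition run (C : network) (x : input) : input :=
  foldl (fun y L => apply_layer L y) x C.

Definition sorted_on (n : nat) (x : input) : Prop :=
  forall k, 1 <= k -> k < n -> x k <= x k.+1.

Definition sorting_network (n : nat) (C : network) : Prop :=
  network_on n C /\ forall x : input, sorted_on n (run C x).

(* layer L_k (1-indexed) of C *)
Definition layer_at (C : network) (k : nat) : layer := nth [::] C k.-1.

Definition llnf (n : nat) (L : layer) : bool :=
  all (fun c => c.2 == c.1.+1) L &&
  [forall k : 'I_n, (1 <= k) ==> (used L k || used L k.+1)].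

(* Main.v *)
Require Import Defs.
From mathcomp Require Import all_boot.
From Stdlib Require Import FunctionalExtensionality.

Definition F := (fun y c => apply_comp c y).

Lemma comm_comp (a b a' b' : nat) x :
  a != a' -> a != b' -> b != a' -> b != b' ->
  apply_comp (a,b) (apply_comp (a',b') x) = apply_comp (a',b') (apply_comp (a,b) x).
Proof.
move=> h1 h2 h3 h4; apply: functional_extensionality => k; rewrite /apply_comp /=.
rewrite (negbTE h1) (negbTE h2) (negbTE h3) (negbTE h4) (eq_sym a' a) (negbTE h1) (eq_sym a' b) (negbTE h3).
rewrite (eq_sym b' a) (negbTE h2) (eq_sym b' b) (negbTE h4).
case: (eqVneq k a) => [->|ka]; first by rewrite (negbTE h1) (negbTE h2).
case: (eqVneq k b) => [->|kb]; first by rewrite (negbTE h3) (negbTE h4).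
by case: (k == a'); case: (k == b').
Qed.

Lemma fold_comm a b s x : a \notin channels s -> b \notin channels s ->
  foldl F (apply_comp (a,b) x) s = apply_comp (a,b) (foldl F x s).
Proof.
elim: s x => [|[a' b'] s IH] x //=.
rewrite /channels /= !inE !negb_or => /and3P[h1 h2 h3] /and3P[h4 h5 h6].
have -> : F (apply_comp (a, b) x) (a', b') = apply_comp (a,b) (F x (a',b')).
  by rewrite /F; symmetry; apply: comm_comp.
by rewrite IH.
Qed.

Lemma fold_keep s x k : k \notin channels s -> foldl F x s k = x k.
Proof.
elim: s x => [|[a' b'] s IH] x //=.
rewrite /channels /= !inE !negb_or => /and3P[h1 h2 h3].
by rewrite IH // /F /apply_comp /= (negbTE h1) (negbTE h2).
Qed.

Lemma noop (a b : nat) (x : input) : x a <= x b -> apply_comp (a,b) x = x.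
Proof.
move=> h; apply: functional_extensionality => k; rewrite /apply_comp /=.
case: (eqVneq k a) => [->|_]; first by move: h; case: (x a); case: (x b).
case: (eqVneq k b) => [->|_] //; by move: h; case: (x a); case: (x b).
Qed.

Lemma channels_cat s t : channels (s ++ t) = channels s ++ channels t.
Proof. by rewrite /channels map_cat flatten_cat. Qed.

Lemma used_bounds n L k : layer_on n L -> used L k -> (1 <= k) && (k <= n).
Proof.
case/andP=> /allP hL _ /flatten_mapP[[a b] /hL /= /andP[/andP[h1 h2] h3]].
rewrite !inE => /orP[]/eqP->.
  by rewrite h1 /= (leq_trans (ltnW h2)).
by rewrite h3 (leq_trans h1 (ltnW h2)).
Qed.

From mathcomp Require Import zify.

Lemma layer_at_last (A : network) L1 L2 :
  layer_at (rcons (rcons A L1) L2) (size A).+2 = L2 /\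
  layer_at (rcons (rcons A L1) L2) (size A).+2.-1 = L1.
Proof.
rewrite /layer_at /= !nth_rcons !size_rcons ltnn eqxx ltnSn ltnn eqxx //.
Qed.

Lemma channels_cons c s : channels (c :: s) = c.1 :: c.2 :: channels s.
Proof. by []. Qed.

Lemma channels_rcons s c : channels (rcons s c) = channels s ++ [:: c.1; c.2].
Proof. by rewrite /channels map_rcons flatten_rcons. Qed.

Lemma uniq_add (a b t : seq nat) : uniq (a ++ b) -> uniq t ->
  all (fun m => m \notin a ++ b) t -> uniq (a ++ b ++ t).
Proof.
move=> h1 h2 h3; rewrite catA cat_uniq h1 h2 andbT.
by apply/hasPn => m /(allP h3).
Qed.

Theorem lemma8 (n d : nat) (C : network) (i : nat) :
  sorting_network n C -> size C = d -> 2 <= d ->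
  llnf n (layer_at C d) ->
  (i, i.+1) \in layer_at C d ->
  used (layer_at C d.-1) i.+2 ->
  ~~ used (layer_at C d) i.+2 ->
  ~~ used (layer_at C d.-1) i ->
  ~~ used (layer_at C d.-1) i.+1 ->
  exists C' : network,
    [/\ sorting_network n C', size C' = d, llnf n (layer_at C' d),
        used (layer_at C' d.-1) i.+1 && used (layer_at C' d.-1) i.+2 &
        used (layer_at C' d) i.+1 && used (layer_at C' d) i.+2].
Proof.
case/lastP: C => [|C0 L2]; first by move=> _ <-.
case/lastP: C0 => [|A L1]; first by move=> _ <-.
move=> [hnet hsort] <- _; rewrite !size_rcons.
have [-> ->] := layer_at_last A L1 L2.
move=> hll hin hu2 hnu2 hnu0 hnu1.
move: hnet; rewrite /network_on !all_rcons => /and3P[hL2 hL1 hA].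
have hi1 : 1 <= i.
  by case/andP: hL2 => /allP /(_ _ hin) /= /andP[/andP[]].
have hin2 : i.+2 <= n by case/andP: (used_bounds _ _ _ hL1 hu2).
have [s1 [s2 eL2]] : exists s1 s2, L2 = s1 ++ (i,i.+1) :: s2.
  by case/splitPr: hin => s1 s2; exists s1, s2.
subst L2.
have hch : channels (s1 ++ (i,i.+1) :: s2) = channels s1 ++ [:: i, i.+1 & channels s2].
  by rewrite channels_cat.
have hu : uniq (channels s1 ++ [:: i, i.+1 & channels s2]).
  by rewrite -hch; case/andP: hL2.
have [n1 n2 n3 n4 hus] : [/\ i \notin channels s1, i.+1 \notin channels s1,
    i \notin channels s2, i.+1 \notin channels s2 & uniq (channels s1 ++ channels s2)].
  move: hu; rewrite cat_uniq => /and3P[us1 /hasPn hh].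
  rewrite /= inE negb_or => /andP[/andP[_ n3] /andP[n4 us2]].
  split => //; first exact: hh i (mem_head _ _).
    by apply: hh; rewrite !inE eqxx orbT.
  rewrite cat_uniq us1 us2 andbT; apply/hasPn => m hm; apply: hh.
  by rewrite !inE hm !orbT.
have [n5 n6] : i.+2 \notin channels s1 /\ i.+2 \notin channels s2.
  by move: hnu2; rewrite /used hch mem_cat !inE !negb_or => /andP[-> /and3P[_ _ ->]].
set L2 := s1 ++ (i, i.+1) :: s2 in hin hll hsort hnu2 hL2 hch.
have hU2 : forall m, used L2 m = [|| m \in channels s1 ++ channels s2, m == i | m == i.+1].
  move=> m; rewrite /used hch !mem_cat !inE.
  by case: (m \in channels s1); case: (m \in channels s2); case: (m == i); case: (m == i.+1).
set cond := (1 < i) && ~~ used L2 i.-1.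
set extra := if cond then [:: (i.-1, i)] else [::].
set L2' := s1 ++ s2 ++ (i.+1, i.+2) :: extra.
have hU2' : forall m, used L2' m =
   [|| m \in channels s1 ++ channels s2, m == i.+1, m == i.+2 | cond && ((m == i.-1) || (m == i))].
  move=> m; rewrite /used /L2' !channels_cat !mem_cat /extra; case: ifP => _ /=; rewrite ?cats0 ?inE;
  by case: (m \in channels s1); case: (m \in channels s2); case: (m == i.+1); case: (m == i.+2);
     case: (m == i.-1); case: (m == i).
set L1' := rcons L1 (i, i.+1).
have hU1 : forall m, used L1' m = [|| used L1 m, m == i | m == i.+1].
  move=> m; rewrite /used /L1' /channels map_rcons flatten_rcons mem_cat !inE.
  done.
have hrun : forall x, run (rcons (rcons A L1') L2') x = run (rcons (rcons A L1) L2) x.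
  move=> x; have := hsort x; rewrite /run !foldl_rcons /= /apply_layer /L1' foldl_rcons /=.
  set z := foldl _ (foldl _ x A) L1.
  rewrite /L2' /L2 !foldl_cat /=.
  set o := foldl _ (apply_comp _ (foldl _ z s1)) s2.
  rewrite (fold_comm i i.+1 s1) // /F -/o => hs.
  rewrite noop; last exact: hs (ltn0Sn _) hin2.
  rewrite /extra; case: ifP => //= /andP[hi2 _].
  have hp : 0 < i.-1 by rewrite -ltnS prednK.
  have hq : i.-1 < n by rewrite prednK // ltnW // ltnW.
  by rewrite noop //; have := hs i.-1 hp hq; rewrite prednK.
have hi2n : i.+2 <= n := hin2.
case/andP: (hL2) => hallL2 _.
move: hallL2; rewrite /L2 all_cat /= => /and3P[hall1 hc0 hall2].
case/andP: (hll) => hadj hcov.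
move: hadj; rewrite /L2 all_cat /= => /and3P[hadj1 _ hadj2].
exists (rcons (rcons A L1') L2').
rewrite !size_rcons; have [-> ->] := layer_at_last A L1' L2'.
split.
- split; last by move=> x; rewrite hrun; apply: hsort.
  rewrite /network_on !all_rcons hA andbT; apply/andP; split.
  + apply/andP; split.
    * rewrite /L2' !all_cat hall1 hall2 /= hi2n /= andbT /extra.
      rewrite ltnSn /=; case: ifP => // /andP[hi2 _] /=.
      have h1 : 0 < i.-1 by rewrite -ltnS prednK.
      have h2 : i.-1 < i by rewrite prednK.
      have h3 : i <= n by rewrite ltnW // ltnW.
      by rewrite h1 h2 h3.
    * rewrite /L2' !channels_cat; apply: uniq_add hus _ _.
        rewrite /extra; case: ifP => [/andP[hi2 _]|_]; rewrite /channels /= !inE ?negb_or.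
          have h2 : i.-1 < i by rewrite prednK.
          by rewrite (ltn_eqF (ltnSn i.+1)) (gtn_eqF (ltn_trans h2 (ltnSn i))) (gtn_eqF (ltnSn i))
             (gtn_eqF (ltn_trans h2 (ltn_trans (ltnSn i) (ltnSn _)))) (gtn_eqF (ltn_trans (ltnSn i) (ltnSn _)))
             (ltn_eqF h2).
        by rewrite (ltn_eqF (ltnSn i.+1)).
      have hnotin : forall m, m \notin channels s1 -> m \notin channels s2 -> m \notin channels s1 ++ channels s2.
        by move=> m a b; rewrite mem_cat negb_or a b.
      rewrite /extra; case: ifP => [/andP[hi2 hnu]|_]; last by rewrite !channels_cons /= !hnotin.
      move: hnu; rewrite hU2 !negb_or => /andP[hm _].
      by rewrite !channels_cons /= hm !hnotin.
  + case/andP: hL1 => hallL1 huL1.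
    rewrite /layer_on /L1' all_rcons hallL1 /= ltnSn hi1 (ltnW hin2) /=.
    rewrite channels_rcons cat_uniq huL1 /=.
    move: hnu0 hnu1; rewrite /used => /negbTE-> /negbTE->; rewrite inE (ltn_eqF (ltnSn i)).
    done.
- done.
- rewrite /llnf; apply/andP; split.
    rewrite /L2' !all_cat hadj1 hadj2 /= eqxx /extra; case: ifP => //= /andP[hi2 _].
    by rewrite prednK // eqxx.
  apply/forallP => k; apply/implyP => hk.
  have := (forallP hcov) k; rewrite hk /= => hk2.
  rewrite !hU2'; rewrite !hU2 in hk2.
  case: (eqVneq (k : nat) i) => [eki|nki]; first by rewrite eki eqxx !orbT.
  case: (eqVneq (k : nat).+1 i) => [eki1|nki1].
    case: (boolP cond) => hc; first by rewrite !orbT.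
    move: hc; rewrite /cond negb_and negbK => /orP[h|h].
      by rewrite -eki1 ltnS hk in h.
    move: h; rewrite hU2 -eki1 /= => /or3P[->//| /eqP h | /eqP h]; exfalso; clear -h; lia.
  move: hk2; rewrite (negbTE nki) (negbTE nki1) eqSS (negbTE nki) /=.
  by case: ((k : nat) \in channels s1 ++ channels s2); case: ((k : nat) == i.+1);
     case: ((k : nat).+1 \in channels s1 ++ channels s2); rewrite ?orbT.
- by rewrite !hU1 hu2 eqxx !orbT.
- by rewrite !hU2' !eqxx !orbT.
Qed.
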